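(* Let $N=(V,E,c,K)$ be a network with killing and let $(X_n)_{n\geq0}$ be the random walk on $N$ started at some $x\in V$. Then for every $m,n\geq0$, \[ \mathbb{E}\left[\frac{p_m(X_n,X_0)}{p_n(X_n,X_0)}\right]\leq\mathbb{P}(X_m\neq\dagger)+\mathbb{P}(X_n=\dagger)\leq2, \] with the convention that the ratio equals $1$ when $X_n=\dagger$.
   Context: A network with killing is $N=(V,E,c,K)$ where $(V,E)$ is a graph, $c:E\to(0,\infty)$ are conductances and $K:V\to[0,\infty)$ is a killing function. With $c(u)$ the total conductance of oriented edges emanating from $u$ and $c(u,v)$ the total conductance of oriented edges from $u$ to $v$, the random walk on $N$ is the Markov chain on $V\cup\{\dagger\}$ with $P(u,v)=c(u,v)/(c(u)+K(u))$ and $P(u,\dagger)=K(u)/(c(u)+K(u))$ for $u,v\in V$, and $P(\dagger,\dagger)=1$. Write $p_n(u,v)=P^n(u,v)$. *)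

(* Defs.v *)
From HB Require Import structures.
From mathcomp Require Import all_boot all_order all_algebra.
From mathcomp Require Import all_classical all_reals all_analysis.
Set Implicit Arguments. Unset Strict Implicit. Unset Printing Implicit Defensive.
Import Order.TTheory GRing.Theory Num.Theory.
Local Open Scope classical_set_scope.
Local Open Scope ring_scope.
Local Open Scope ereal_scope.

(* A network with killing N = (V, E, c, K):
   - (V, E) is an undirected multigraph (loops and multiple edges allowed):
     each edge e : E has an (unordered) pair of endpoints [ends e];
   - c : E -> (0, oo) conductances, K : V -> [0, oo) killing.
   Each edge e yields two oriented edges (e, true), (e, false). *)
Section Network.
Variables (R : realType) (V E : choiceType) (ends : E -> V * V) (c : E -> R)
  (K : V -> R).

Definition otail (o : E * bool) : V :=
  if o.2 then (ends o.1).1 else (ends o.1).2.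
Definition ohead (o : E * bool) : V :=
  if o.2 then (ends o.1).2 else (ends o.1).1.

Definition cond2 (u v : V) : \bar R :=
  \esum_(o in [set o | otail o = u /\ ohead o = v]) (c o.1)%:E.

Definition cond1 (u : V) : \bar R :=
  \esum_(o in [set o | otail o = u]) (c o.1)%:E.

(* Transition kernel of the random walk on V ∪ {†}, with † = None. *)
Definition trans (y z : option V) : \bar R :=
  match y, z with
  | Some u, Some v => (fine (cond2 u v) / (fine (cond1 u) + K u))%R%:E
  | Some u, None => (K u / (fine (cond1 u) + K u))%R%:E
  | None, None => 1
  | None, Some _ => 0
  end.

Fixpoint pn (n : nat) (y z : option V) : \bar R :=
  match n with
  | O => if y == z then 1 else 0
  | S k => \esum_(w in [set: option V]) (pn k y w * trans w z)
  end.

(* For the walk (X_n) started at x: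
   E[ p_m(X_n,X_0) / p_n(X_n,X_0) ], with ratio := 1 when X_n = †.
   Computed through the law of X_n (X_0 = x a.s.): P(X_n = y) = p_n(x,y). *)
Definition ratio (m n : nat) (x : V) (y : option V) : \bar R :=
  match y with
  | None => 1
  | Some v => (fine (pn m (Some v) (Some x)) / fine (pn n (Some v) (Some x)))%R%:E
  end.

Definition exp_ratio (m n : nat) (x : V) : \bar R :=
  \esum_(y in [set: option V]) (pn n (Some x) y * ratio m n x y).

Definition prob_alive (m : nat) (x : V) : \bar R :=
  \esum_(y in [set y : option V | y <> None]) pn m (Some x) y.
Definition prob_dead (n : nat) (x : V) : \bar R := pn n (Some x) None.

End Network.

(* Main.v *)
Require Import Defs.
From HB Require Import structures.
From mathcomp Require Import all_boot all_order all_algebra.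
From mathcomp Require Import all_classical all_reals all_analysis.
From mathcomp Require Import ring lra.
Import Order.TTheory GRing.Theory Num.Theory.
Local Open Scope classical_set_scope.
Local Open Scope ring_scope.
Local Open Scope ereal_scope.

Section Aux.
Variable R : realType.

Lemma esumZl (T : choiceType) (I : set T) (a : T -> \bar R) (r : R) :
  (0 <= r)%R -> (forall i, 0 <= a i) ->
  \esum_(i in I) (r%:E * a i)%E = r%:E * \esum_(i in I) a i.
Proof.
move=> r0 a0; move: r0; rewrite le_eqVlt => /orP[/eqP<-|r0].
  by rewrite mul0e esum1 // => i _; rewrite mul0e.
rewrite /esum -ereal_sup_pZl //; congr ereal_sup; apply/seteqP; split => y /=.
  case=> A HA <-; exists (\sum_(x \in A) a x)%R; first by exists A.
  by rewrite ge0_mule_fsumr.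
case=> _ [A HA <-] <-; exists A => //.
by rewrite ge0_mule_fsumr.
Qed.

Lemma esumZr (T : choiceType) (I : set T) (a : T -> \bar R) (r : R) :
  (0 <= r)%R -> (forall i, 0 <= a i) ->
  \esum_(i in I) (a i * r%:E)%E = (\esum_(i in I) a i) * r%:E.
Proof.
move=> r0 a0; rewrite muleC -esumZl //; apply: eq_esum => i _; exact: muleC.
Qed.

Lemma esum_swap (T1 T2 : choiceType) (F : T1 -> T2 -> \bar R) :
  (forall i j, 0 <= F i j) ->
  \esum_(i in [set: T1]) \esum_(j in [set: T2]) F i j =
  \esum_(j in [set: T2]) \esum_(i in [set: T1]) F i j.
Proof.
move=> F0; rewrite !esum_esum //.
rewrite (reindex_esum ([set: T2] `*`` (fun _ => [set: T1]))
   ([set: T1] `*`` (fun _ => [set: T2])) (fun k => (k.2, k.1))) //.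
split.
- by move=> k _.
- by move=> [a b] [a' b'] _ _ /= [-> ->].
- by move=> [a b] _; exists (b, a).
Qed.

Lemma esum_ge1 (T : choiceType) (a : T -> \bar R) t :
  (forall i, 0 <= a i) -> a t <= \esum_(i in [set: T]) a i.
Proof.
move=> a0; apply: esum_ge; exists [set t].
  by split => //; exact: finite_set1.
by rewrite fsbig_set1.
Qed.

Lemma esum_delta (T : choiceType) (a : T -> \bar R) t :
  (forall i, 0 <= a i) ->
  \esum_(i in [set: T]) (if t == i then a i else 0) = a t.
Proof.
move=> a0; rewrite (esumID [set t]); last by move=> i _; case: ifP.
rewrite setTI esum_set1 ?eqxx // esum1 ?adde0 // => i [_ /= /eqP].
by rewrite eq_sym => /negPf ->.
Qed.

Lemma esum_option (T : choiceType) (a : option T -> \bar R) :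
  (forall i, 0 <= a i) ->
  \esum_(i in [set: option T]) a i = \esum_(v in [set: T]) a (Some v) + a None.
Proof.
move=> a0; rewrite (esumID [set None]) // setTI esum_set1 // addeC.
congr (_ + _).
rewrite (reindex_esum [set: T] _ Some) //; split.
- by move=> v _ /=; split => //.
- by move=> u v _ _ [].
- by move=> [v|] [_ /= H] //; exists v.
Qed.

End Aux.

Section Net.
Variables (R : realType) (V E : choiceType) (ends : E -> V * V)
  (c : E -> R) (K : V -> R).
Hypothesis c_pos : forall e, (0 < c e)%R.
Hypothesis K_ge0 : forall u, (0 <= K u)%R.
Hypothesis c_fin : forall u, cond1 ends c u < +oo.
Hypothesis walk_def : forall u, (0 < fine (cond1 ends c u) + K u)%R.

Local Notation pi u := (fine (cond1 ends c u) + K u)%R.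
Local Notation P := (trans ends c K).
Local Notation p := (pn ends c K).

Lemma cond1_ge0 u : 0 <= cond1 ends c u.
Proof. by apply: esum_ge0 => o _; rewrite lee_fin ltW. Qed.

Lemma cond2_ge0 u v : 0 <= cond2 ends c u v.
Proof. by apply: esum_ge0 => o _; rewrite lee_fin ltW. Qed.

Lemma cond1_fin u : cond1 ends c u = (fine (cond1 ends c u))%:E.
Proof. by rewrite fineK // ge0_fin_numE ?c_fin ?cond1_ge0. Qed.

Lemma cond2_sum u :
  \esum_(v in [set: V]) cond2 ends c u v = cond1 ends c u.
Proof.
rewrite /cond2 esum_esum; last by move=> v o _ _; rewrite lee_fin ltW.
rewrite /cond1 (reindex_esum [set o | otail ends o = u]
   ([set: V] `*`` (fun v => [set o | otail ends o = u /\ Defs.ohead ends o = v]))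
   (fun o => (Defs.ohead ends o, o))) //.
split.
- by move=> o /= H; split.
- by move=> o o' _ _ [].
- by move=> [v o] /= [_ [H1 H2]]; exists o => //; rewrite H2.
Qed.

Lemma cond2_le u v : cond2 ends c u v <= cond1 ends c u.
Proof.
rewrite -cond2_sum; apply: (@esum_ge1 R V (fun v => cond2 ends c u v)) => i.
exact: cond2_ge0.
Qed.

Lemma cond2_fin u v : cond2 ends c u v = (fine (cond2 ends c u v))%:E.
Proof.
rewrite fineK // ge0_fin_numE ?cond2_ge0 //.
exact: le_lt_trans (cond2_le u v) (c_fin u).
Qed.

Lemma cond2_sym u v : cond2 ends c u v = cond2 ends c v u.
Proof.
rewrite /cond2 (reindex_esum [set o | otail ends o = v /\ Defs.ohead ends o = u]
   [set o | otail ends o = u /\ Defs.ohead ends o = v]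
   (fun o => (o.1, ~~ o.2))) //.
split.
- by move=> [e b] /= [H1 H2]; rewrite /otail /Defs.ohead /= in H1 H2 *; case: b H1 H2 => /=.
- by move=> [e b] [e' b'] _ _ /= [-> /negb_inj ->].
- move=> [e b] /= [H1 H2]; exists (e, ~~ b); last by rewrite negbK.
  by rewrite /otail /Defs.ohead /= in H1 H2 *; case: b H1 H2 => /=.
Qed.

Lemma trans_ge0 y z : 0 <= P y z.
Proof.
case: y z => [u|] [v|] //=; rewrite lee_fin divr_ge0 ?(ltW (walk_def u)) //.
by rewrite fine_ge0 // cond2_ge0.
Qed.

Lemma pn_ge0 k y z : 0 <= p k y z.
Proof.
elim: k z => [|k IH] z /=; first by case: ifP.
by apply: esum_ge0 => w _; rewrite mule_ge0 // trans_ge0.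
Qed.


Lemma trans_sum y : \esum_(z in [set: option V]) P y z <= 1.
Proof.
rewrite esum_option; last exact: trans_ge0.
case: y => [u|] /=; last by rewrite esum1 ?add0e.
rewrite (eq_esum (b := fun v => (pi u)^-1%:E * cond2 ends c u v)); last first.
  by move=> v _; rewrite [cond2 _ _ _ _ in RHS]cond2_fin -EFinM mulrC.
rewrite esumZl; last by exact: cond2_ge0.
  rewrite cond2_sum cond1_fin -EFinM -EFinD lee_fin.
  have h := walk_def u.
  rewrite le_eqVlt; apply/orP; left; apply/eqP; field.
  by rewrite gt_eqF.
by rewrite invr_ge0 ltW.
Qed.


Lemma pn_sum k y : \esum_(z in [set: option V]) p k y z <= 1.
Proof.
elim: k y => [|k IH] y /=.
  by rewrite (@esum_delta R _ (fun _ => (1 : \bar R))).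
rewrite (@esum_swap R _ _ (fun z w => p k y w * P w z)); last first.
  by move=> i j; rewrite mule_ge0 ?pn_ge0 ?trans_ge0.
apply: le_trans (IH y); apply: le_esum => w _.
have h0 := pn_ge0 k y w.
have hf : p k y w = (fine (p k y w))%:E.
  rewrite fineK // ge0_fin_numE //.
  exact: le_lt_trans (@esum_ge1 _ _ _ w (pn_ge0 k y)) (le_lt_trans (IH y) (ltry 1)).
rewrite hf esumZl ?fine_ge0 //; last exact: trans_ge0.
by rewrite -[leRHS]mule1 lee_wpmul2l ?lee_fin ?fine_ge0 // trans_sum.
Qed.

Lemma pn_le1 k y z : p k y z <= 1.
Proof. exact: le_trans (@esum_ge1 _ _ _ z (pn_ge0 k y)) (pn_sum k y). Qed.

Lemma pn_fin k y z : p k y z = (fine (p k y z))%:E.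
Proof.
rewrite fineK // ge0_fin_numE ?pn_ge0 //.
exact: le_lt_trans (pn_le1 k y z) (ltry 1).
Qed.


Lemma trans_fin y z : P y z = (fine (P y z))%:E.
Proof. by case: y z => [u|] [v|]. Qed.

Lemma pn_CK a b y z : p (a + b) y z = \esum_(w in [set: option V]) (p a y w * p b w z).
Proof.
elim: b z => [|b IH] z.
  rewrite addn0 /=.
  rewrite (eq_esum (b := fun w => if z == w then p a y w else 0)).
    by rewrite (@esum_delta R _ (fun w => p a y w)) // => i; exact: pn_ge0.
  by move=> w _; rewrite eq_sym; case: eqP => _; rewrite ?mule1 ?mule0.
rewrite addnS /=.
transitivity (\esum_(u in [set: option V]) \esum_(w in [set: option V])
    (p a y w * (p b w u * P u z))).
  apply: eq_esum => u _; rewrite IH (trans_fin u z) -esumZr.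
  - by apply: eq_esum => w _; rewrite -trans_fin muleA.
  - by rewrite fine_ge0 // trans_ge0.
  - by move=> w; rewrite mule_ge0 ?pn_ge0.
rewrite (@esum_swap R _ _ (fun u w => p a y w * (p b w u * P u z))); last first.
  by move=> i j; rewrite !mule_ge0 ?pn_ge0 ?trans_ge0.
apply: eq_esum => w _; rewrite (pn_fin a y w) esumZl //.
  by rewrite fine_ge0 // pn_ge0.
by move=> u; rewrite mule_ge0 ?pn_ge0 ?trans_ge0.
Qed.

Lemma pn1 y w : p 1 y w = P y w.
Proof.
rewrite /= (eq_esum (b := fun u => if y == u then P u w else 0)).
  by rewrite (@esum_delta R _ (fun u => P u w)) // => i; exact: trans_ge0.
by move=> u _; case: eqP => _; rewrite ?mul1e ?mul0e.
Qed.

Lemma pn_left k y z : p k.+1 y z = \esum_(w in [set: option V]) (P y w * p k w z).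
Proof.
by rewrite -add1n pn_CK; apply: eq_esum => w _; rewrite pn1.
Qed.

Lemma pn_None k v : p k None (Some v) = 0.
Proof.
elim: k v => [|k IH] v //=.
by apply: esum1 => -[w|] _; rewrite ?IH ?mul0e //= mule0.
Qed.


Lemma pn_rev k u v :
  (pi u)%:E * p k (Some u) (Some v) = (pi v)%:E * p k (Some v) (Some u).
Proof.
elim: k u v => [|k IH] u v.
  rewrite /=; case: (eqVneq u v) => [->|neq] //.
  have h1 : (Some u == Some v) = false by apply/eqP => -[] /eqP; rewrite (negPf neq).
  have h2 : (Some v == Some u) = false by rewrite eq_sym.
  by rewrite h1 h2 !mule0.
have pn_right : p k.+1 (Some u) (Some v) =
  \esum_(w in [set: option V]) (p k (Some u) w * P w (Some v)) by [].
rewrite [in RHS]pn_left pn_right.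
rewrite -(@esumZl R _ _ _ _ (ltW (walk_def u))); last first.
  by move=> w; rewrite mule_ge0 ?pn_ge0 ?trans_ge0.
rewrite -(@esumZl R _ _ _ _ (ltW (walk_def v))); last first.
  by move=> w; rewrite mule_ge0 ?pn_ge0 ?trans_ge0.
apply: eq_esum => -[w|] _; last by rewrite pn_None /= !mule0.
have := IH u w.
rewrite (pn_fin k (Some u) (Some w)) (pn_fin k (Some w) (Some u)) /= -!EFinM.
move=> [IH']; congr EFin.
rewrite (cond2_sym w v).
set p1 := fine (p k (Some u) (Some w)) in IH' *.
set p2 := fine (p k (Some w) (Some u)) in IH' *.
set q := fine (cond2 ends c v w).
have hw := walk_def w; have hv := walk_def v.
have -> : (pi u * (p1 * (q / pi w)) = (pi u * p1) * (q / pi w))%R by ring.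
rewrite IH'; field.
by rewrite !gt_eqF.
Qed.


Lemma alive_eq m x :
  prob_alive ends c K m x = \esum_(v in [set: V]) p m (Some x) (Some v).
Proof.
rewrite /prob_alive (reindex_esum [set: V] _ Some) //; split.
- by move=> v _ /=.
- by move=> u w _ _ [].
- by move=> [w|] /= H //; exists w.
Qed.

Lemma main1 m n x :
  exp_ratio ends c K m n x <= prob_alive ends c K m x + prob_dead ends c K n x.
Proof.
rewrite /exp_ratio esum_option; last first.
  move=> [v|] /=; rewrite ?mule1 ?pn_ge0 //.
  by rewrite mule_ge0 ?pn_ge0 // lee_fin divr_ge0 // fine_ge0 // pn_ge0.
rewrite alive_eq /prob_dead /= mule1; apply: leeD => //.
apply: le_esum => v _.
move: (pn_rev n x v).
rewrite (pn_fin n (Some x) (Some v)) (pn_fin n (Some v) (Some x)) -!EFinM => -[h1].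
move: (pn_rev m x v).
rewrite (pn_fin m (Some x) (Some v)) (pn_fin m (Some v) (Some x)) -!EFinM => -[h2].
rewrite lee_fin.
set a := fine (p n (Some x) (Some v)) in h1 *.
set b := fine (p n (Some v) (Some x)) in h1 *.
set r := fine (p m (Some v) (Some x)) in h2 *.
set s := fine (p m (Some x) (Some v)) in h2 *.
have hs : (0 <= s)%R by rewrite fine_ge0 // pn_ge0.
have hx := walk_def x; have hv := walk_def v.
have [b0|bn0] := eqVneq b 0%R.
  by rewrite b0 invr0 !mulr0.
have -> : s = (pi v * r / pi x)%R by rewrite -h2; field; rewrite gt_eqF.
have -> : a = (pi v * b / pi x)%R by rewrite -h1; field; rewrite gt_eqF.
rewrite le_eqVlt; apply/orP; left; apply/eqP => /=. field.
by rewrite bn0 gt_eqF.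
Qed.

Lemma main2 m n x :
  prob_alive ends c K m x + prob_dead ends c K n x <= 2%:E.
Proof.
have ha : prob_alive ends c K m x <= 1.
  rewrite alive_eq; apply: le_trans (pn_sum m (Some x)).
  rewrite esum_option; last exact: pn_ge0.
  by rewrite leeDl // pn_ge0.
have hd : prob_dead ends c K n x <= 1 by exact: pn_le1.
apply: le_trans (leeD ha hd) _.
by rewrite -EFinD lee_fin; lra.
Qed.

End Net.

Theorem lemma3p3 (R : realType) (V E : choiceType) (ends : E -> V * V)
  (c : E -> R) (K : V -> R)
  (c_pos : forall e, (0 < c e)%R)
  (K_ge0 : forall u, (0 <= K u)%R)
  (c_fin : forall u, cond1 ends c u < +oo)
  (walk_def : forall u, (0 < fine (cond1 ends c u) + K u)%R)
  (x : V) (m n : nat) :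
  exp_ratio ends c K m n x <= prob_alive ends c K m x + prob_dead ends c K n x
  /\ prob_alive ends c K m x + prob_dead ends c K n x <= 2%:E.
Proof.
split; [exact: main1 | exact: main2].
Qed.
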